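(* Let $k\ge 2$ be an odd integer which is not prime. Every $k$-$T_0T^\ast$-perfect number $n>1$ has the form $p_1^{2k-1}$ for a prime $p_1$, or the form $p_1^{(d-1)/2}\cdot p_2^{(k/d-1)/2}$ for distinct primes $p_1,p_2$, where $d$ is a positive divisor of $k$ satisfying $2<d<k$.
   Context: For a positive integer $m$, $T(m)$ denotes the product of all positive divisors of $m$, and $T^\ast(m)$ the product of all unitary divisors of $m$ (divisors $d$ with $\gcd(d,m/d)=1$). For an integer $K\ge 2$, an integer $n>1$ is called $K$-$T_0T^\ast$-perfect if $T(T^\ast(n))=n^K$. *)

(* Defs.v *)
From mathcomp Require Import all_boot.
Set Implicit Arguments. Unset Strict Implicit. Unset Printing Implicit Defensive.

Definition Tdiv (m : nat) : nat := \prod_(d <- divisors m) d.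

Definition Tstar (m : nat) : nat :=
  \prod_(d <- divisors m | coprime d (m %/ d)) d.

Definition KT0Tstar_perfect (K n : nat) : Prop :=
  1 < n /\ Tdiv (Tstar n) = n ^ K.

(* Main.v *)
Require Import Defs.
From mathcomp Require Import all_boot.
From mathcomp Require Import zify.


Lemma prod_const_seq (r : seq nat) m : \prod_(i <- r) m = m ^ size r.
Proof. by elim: r => [|x r IH]; rewrite ?big_nil ?big_cons ?IH ?expnS. Qed.

Lemma divnKd {d m} : 0 < m -> d %| m -> m %/ (m %/ d) = d.
Proof.
move=> m0 /dvdnP[k ek]; subst m.
have d0 : 0 < d by move: m0; rewrite muln_gt0 => /andP[].
have k0 : 0 < k by move: m0; rewrite muln_gt0 => /andP[].
by rewrite mulnK // mulKn.
Qed.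

Lemma pair_prod (m : nat) (P : pred nat) : 0 < m ->
  (forall d, d %| m -> P (m %/ d) = P d) ->
  (\prod_(d <- divisors m | P d) d) ^ 2 = m ^ count P (divisors m).
Proof.
move=> m0 HP; rewrite -big_filter -size_filter.
set U := filter P (divisors m).
have memU d : (d \in U) = (d %| m) && P d.
  by rewrite mem_filter -dvdn_divisors // andbC.
have pU : perm_eq U (map (divn m) U).
  apply: uniq_perm.
  - by rewrite filter_uniq // divisors_uniq.
  - rewrite map_inj_in_uniq ?filter_uniq ?divisors_uniq // => x y.
    rewrite !memU => /andP[xm _] /andP[ym _] e.
    by rewrite -(divnKd m0 xm) e divnKd.
  - move=> x; apply/idP/mapP.
    + rewrite memU => /andP[xm Px]; exists (m %/ x); last by rewrite divnKd.
      by rewrite memU dvdn_div // HP.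
    + by case=> y; rewrite memU => /andP[ym Py] ->; rewrite memU dvdn_div // HP.
rewrite expnS expn1 {2}(perm_big _ pU) big_map -big_split /=.
rewrite (eq_big_seq (fun _ => m)) ?prod_const_seq // => x.
by rewrite memU => /andP[xm _]; rewrite mulnC divnK.
Qed.

Lemma dec_gcd {a b d} : coprime a b -> d %| a * b -> d = gcdn d a * gcdn d b.
Proof.
move=> cab dab; apply/eqP; rewrite eqn_dvd; apply/andP; split.
  rewrite muln_gcdl dvdn_gcd dvdn_mulr //= muln_gcdr dvdn_gcd dvdn_mull //.
rewrite Gauss_dvd ?dvdn_gcdl //.
apply: (coprime_dvdl (dvdn_gcdr _ _)); apply: (coprime_dvdr (dvdn_gcdr _ _)) => //.
Qed.

Definition ufilt (c : bool) n d := c ==> coprime d (n %/ d).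

Lemma key c a b x y : coprime a b -> 0 < a -> 0 < b -> x %| a -> y %| b ->
  ufilt c (a * b) (x * y) = ufilt c a x && ufilt c b y.
Proof.
case: c => //= cab a0 b0 /dvdnP[a' ea] /dvdnP[b' eb]; subst a b.
have x0 : 0 < x by move: a0; rewrite muln_gt0 => /andP[].
have y0 : 0 < y by move: b0; rewrite muln_gt0 => /andP[].
have -> : a' * x * (b' * y) = (a' * b') * (x * y) by rewrite mulnACA.
rewrite !mulnK ?muln_gt0 ?x0 // coprimeMl !coprimeMr.
have cxb : coprime x b'.
  by apply: (coprime_dvdl (dvdn_mull a' (dvdnn x))); apply: (coprime_dvdr (dvdn_mulr y (dvdnn b'))).
have cya : coprime y a'.
  rewrite coprime_sym; apply: (coprime_dvdl (dvdn_mulr x (dvdnn a'))); apply: (coprime_dvdr (dvdn_mull b' (dvdnn y))) => //.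
by rewrite cxb cya /= andbT.
Qed.

Lemma divM c a b : 0 < a -> 0 < b -> coprime a b ->
  size [seq d <- divisors (a * b) | ufilt c (a * b) d] =
  size [seq d <- divisors a | ufilt c a d] * size [seq d <- divisors b | ufilt c b d].
Proof.
move=> a0 b0 cab; have ab0 : 0 < a * b by rewrite muln_gt0 a0.
rewrite -(size_allpairs muln); apply: perm_size; apply: uniq_perm.
- by rewrite filter_uniq // divisors_uniq.
- apply: allpairs_uniq; rewrite ?filter_uniq ?divisors_uniq //.
  move=> [x1 y1] [x2 y2] /allpairsP[[u1 v1] [/= u1m v1m [-> ->]]] /=.
  move=> /allpairsP[[u2 v2] [/= u2m v2m [-> ->]]] /= e.
  move: u1m v1m u2m v2m; rewrite !mem_filter -!dvdn_divisors //.
  move=> /andP[_ u1a] /andP[_ v1b] /andP[_ u2a] /andP[_ v2b].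
  have gx u v : u %| a -> v %| b -> gcdn a (u * v) = u.
    move=> ua vb; rewrite Gauss_gcdl; first exact/gcdn_idPr.
    exact: (coprime_dvdr vb).
  have gy u v : u %| a -> v %| b -> gcdn b (u * v) = v.
    move=> ua vb; rewrite Gauss_gcdr; first exact/gcdn_idPr.
    by rewrite coprime_sym (coprime_dvdl ua cab).
  have h1 : u1 = u2 by rewrite -(gx u1 v1) // e gx.
  have h2 : v1 = v2 by rewrite -(gy u1 v1) // e gy.
  by rewrite h1 h2.
move=> d; rewrite mem_filter -dvdn_divisors //; apply/andP/allpairsP.
  move=> [fd dab]; exists (gcdn d a, gcdn d b) => /=.
  rewrite !mem_filter -!dvdn_divisors // !dvdn_gcdr.
  have e := dec_gcd cab dab.
  have := fd; rewrite e key ?dvdn_gcdr // => /andP[f1 f2].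
  by rewrite !andbT -e.
move=> [[x y] /= []]; rewrite !mem_filter -!dvdn_divisors // => /andP[fx xa] /andP[fy yb] ->.
by rewrite key // fx fy dvdn_mul.
Qed.
Lemma divisors_pp p e : prime p ->
  perm_eq (divisors (p ^ e)) [seq p ^ i | i <- iota 0 e.+1].
Proof.
move=> pp; have p1 := prime_gt1 pp; have p0 := prime_gt0 pp.
apply: uniq_perm; first exact: divisors_uniq.
  by rewrite map_inj_uniq ?iota_uniq //; apply: expnI.
move=> d; rewrite -dvdn_divisors ?expn_gt0 ?p0 //; apply/idP/mapP.
  by move=> /(dvdn_pfactor _ _ pp)[m me ->]; exists m; rewrite // mem_iota.
by move=> [m]; rewrite mem_iota => /andP[_ me] ->; apply/dvdn_pfactor => //; exists m.
Qed.

Lemma tau_pp p e : prime p -> size [seq d <- divisors (p ^ e) | ufilt false (p ^ e) d] = e.+1.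
Proof.
by move=> pp; rewrite filter_predT (perm_size (divisors_pp p e pp)) size_map size_iota.
Qed.

Lemma utau_pp p e : prime p -> 0 < e ->
  size [seq d <- divisors (p ^ e) | ufilt true (p ^ e) d] = 2.
Proof.
move=> pp e0; have p1 := prime_gt1 pp; have p0 := prime_gt0 pp.
rewrite size_filter (permP (divisors_pp p e pp)) count_map.
rewrite (@eq_in_count _ _ (predU (pred1 0) (pred1 e))); last first.
  move=> i; rewrite mem_iota /= => ie; rewrite /ufilt /= -expnB //.
  case: i ie => [|i] ie; first by rewrite coprime1n.
  case: (ltngtP i.+1 e) => h; last 2 first.
  - lia.
  - by rewrite h subnn coprimen1 orbT.
  rewrite coprime_pexpl // coprime_pexpr ?subn_gt0 // /coprime gcdnn.
  apply/negbTE; rewrite neq_ltn p1 orbT /=; lia.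
move: (count_predUI (pred1 0) (pred1 e) (iota 0 e.+1)).
rewrite (@eq_count _ (predI _ _) pred0); last by move=> i /=; apply/negbTE; lia.
rewrite count_pred0 addn0 => ->.
rewrite !(count_uniq_mem _ (iota_uniq 0 e.+1)) !mem_iota; lia.
Qed.

Definition utau m := size [seq d <- divisors m | ufilt true m d].

Lemma utau_val n : 0 < n -> utau n = 2 ^ size (primes n).
Proof.
elim: n {-2}n (leqnn n) => [|N IH] n nN n0; first by lia.
case: (ltngtP n 1) => n1; [by lia| |by subst n].
have pp := pdiv_prime n1; set p := pdiv n in pp *.
have pin : p \in primes n by rewrite mem_primes pp (ltnW n1) pdiv_dvd.
have e := partnC p (ltnW n1).
have cp := coprime_partC p n n.
have a0 : 0 < logn p n by rewrite logn_gt0.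
rewrite /utau -e divM ?part_gt0 // p_part utau_pp // -/(utau _).
have ltm : n`_p^' < n.
  rewrite -{2}e ltn_Pmull ?part_gt0 // p_part -(expn0 p) ltn_exp2l ?prime_gt1 //.
rewrite IH ?part_gt0 //; last by lia.
rewrite primes_part size_filter.
have := count_predC (pred1 p) (primes n).
rewrite (count_uniq_mem _ (primes_uniq n)) pin.
have -> : count [in p^'] (primes n) = count (predC (pred1 p)) (primes n).
  by apply: eq_count => x /=; rewrite !inE.
rewrite -p_part e; move=> <- /=; rewrite expnS.
by [].
Qed.

Lemma n_decomp n : 0 < n -> n = \prod_(p <- primes n) p ^ logn p n.
Proof. by move=> n0; rewrite {1}(prod_prime_decomp n0) prime_decompE big_map. Qed.

Lemma Tdiv2 m : 0 < m -> Tdiv m ^ 2 = m ^ size (divisors m).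
Proof. by move=> m0; rewrite /Tdiv -count_predT; apply: (pair_prod m predT m0). Qed.

Lemma Tstar2 n : 0 < n -> Tstar n ^ 2 = n ^ utau n.
Proof.
move=> n0; rewrite /utau size_filter; apply: (pair_prod n (ufilt true n) n0) => // d dn.
by rewrite /ufilt /= divnKd // coprime_sym.
Qed.

Lemma tau_div m : size (divisors m) = size [seq d <- divisors m | ufilt false m d].
Proof. by rewrite filter_predT. Qed.

Theorem mainTheorem11 (K : nat) :
  2 <= K -> odd K -> ~~ prime K ->
  forall n : nat, KT0Tstar_perfect K n ->
    (exists p1, prime p1 /\ n = p1 ^ (2 * K - 1)) \/
    (exists p1 p2 d, [/\ prime p1 /\ prime p2, p1 != p2,
        d %| K, 2 < d < K &
        n = p1 ^ ((d - 1) %/ 2) * p2 ^ ((K %/ d - 1) %/ 2)]).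
Proof.
move=> K2 oK _ n [n1 hT].
have n0 : 0 < n by lia.
set S := Tstar n in hT.
have hS : S ^ 2 = n ^ utau n by apply: Tstar2.
have S0 : 0 < S.
  case: (posnP S) hS => // ->; rewrite exp0n // => /esym/eqP.
  by rewrite -[_ == 0]negbK -lt0n expn_gt0 n0.
have hTS := Tdiv2 _ S0; rewrite hT in hTS.
set t := size (divisors S) in hTS.
have h4 : 4 * K = utau n * t.
  apply/eqP; rewrite -(eqn_exp2l _ _ n1) mulnC expnM -[4]/(2 * 2) expnM.
  by rewrite -expnM mulnC expnM hTS -!expnM mulnC expnM hS -expnM mulnC.
have ut := utau_val n n0.
have hdec := n_decomp n n0.
have pr x : x \in primes n -> prime x by rewrite mem_primes => /andP[].
have lg x : x \in primes n -> 0 < logn x n by rewrite logn_gt0.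
have un := primes_uniq n.
case E: (primes n) => [|p [|q [|r rest]]] in ut hdec pr lg un.
- by move: (primes_eq0 n); rewrite E /= => /esym; rewrite ltnNge n1.
- rewrite ut [size _]/= expn1 in hS h4.
  have eS : S = n by apply/eqP; rewrite -(eqn_exp2r _ _ (isT : 0 < 2)) hS.
  have pp : prime p by apply: pr; rewrite inE.
  set a := logn p n in hdec.
  have en : n = p ^ a by rewrite {1}hdec big_seq1.
  have ht : t = a.+1 by rewrite /t eS {1}en tau_div tau_pp.
  left; exists p; split => //; rewrite {1}en; congr (p ^ _); lia.
- rewrite ut [size _]/= in hS h4.
  have eS : S = n ^ 2.
    by apply/eqP; rewrite -(eqn_exp2r _ _ (isT : 0 < 2)) hS -expnM.
  have pp : prime p by apply: pr; rewrite !inE eqxx.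
  have qp : prime q by apply: pr; rewrite !inE eqxx orbT.
  have a0 : 0 < logn p n by apply: lg; rewrite !inE eqxx.
  have b0 : 0 < logn q n by apply: lg; rewrite !inE eqxx orbT.
  have pq : p != q by move: un; rewrite /= inE andbT.
  set a := logn p n in hdec a0.
  set b := logn q n in hdec b0.
  have en : n = p ^ a * q ^ b by rewrite {1}hdec big_cons big_seq1.
  have cpq : coprime (p ^ (a * 2)) (q ^ (b * 2)).
    by apply: coprimeXl; apply: coprimeXr; rewrite prime_coprime // dvdn_prime2.
  have ht : t = (a * 2).+1 * (b * 2).+1.
    rewrite /t eS {1}en expnMn -!expnM tau_div divM ?expn_gt0 ?prime_gt0 //.
    by rewrite !tau_pp.
  have eK : K = (a * 2).+1 * (b * 2).+1 by lia.
  right; exists p, q, (a * 2).+1; split => //.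
  + by rewrite eK dvdn_mulr.
  + apply/andP; split; first by lia.
    rewrite eK; nia.
  + rewrite eK mulKn // {1}en; congr (_ ^ _ * _ ^ _); lia.

- move: h4; rewrite ut [size _]/= !expnS -!mulnA.
  set X := _ * t => h.
  have eK : K = 2 * (2 * X) by lia.
  by move: oK; rewrite eK oddM.
Qed.
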